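(* For any context $\Gamma$ and type $T$ of the Scalar type system: if $\Gamma\vdash\mathbf 0:T$ then $T\equiv\overline0$.
   Context: Fix a commutative ring $(\mathcal{S},+,\times)$. Terms: $t,r ::= b \mid (t)\,r \mid \mathbf{0} \mid \alpha.t \mid t+r$, basis terms $b ::= x \mid \lambda x\,t$, modulo associativity and commutativity of $+$. Types: $T ::= U \mid \forall X.T \mid \alpha.T \mid \overline{0}$; unit types: $U ::= X \mid U\to T \mid \forall X.U$. Type variables are only substituted by unit types; $(\alpha.T)[U/X]=\alpha.T[U/X]$. Type equivalence $\equiv$ is the least congruence with $\alpha.\overline0\equiv\overline0$, $0.T\equiv\overline0$, $1.T\equiv T$, $\alpha.(\beta.T)\equiv(\alpha\times\beta).T$, $\forall X.\alpha.T\equiv\alpha.\forall X.T$. A context is a set of distinct term variables with unit types. Typing rules: (ax) $\Gamma,x:U\vdash x:U$; ($\equiv$) from $\Gamma\vdash t:T$ and $T\equiv S$ infer $\Gamma\vdash t:S$; ($\to_E$) from $\Gamma\vdash t:\alpha.(U\to T)$ and $\Gamma\vdash r:\beta.U$ infer $\Gamma\vdash (t)\,r:(\alpha\times\beta).T$; ($\to_I$) from $\Gamma,x:U\vdash t:T$ infer $\Gamma\vdash\lambda x\,t:U\to T$; ($\forall_E$) from $\Gamma\vdash t:\forall X.T$ infer $\Gamma\vdash t:T[U/X]$, $U$ unit; ($\forall_I$) from $\Gamma\vdash t:T$ with $X$ not free in $\Gamma$ infer $\Gamma\vdash t:\forall X.T$; ($ax_{\overline0}$) $\Gamma\vdash\mathbf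 0:\overline0$; ($+_I$) from $\Gamma\vdash t:\alpha.T$ and $\Gamma\vdash r:\beta.T$ infer $\Gamma\vdash t+r:(\alpha+\beta).T$; ($s_I$) from $\Gamma\vdash t:T$ infer $\Gamma\vdash\alpha.t:\alpha.T$. *)

(* Defs.v *)
(* Binders (term variables in lambda, type variables in forall) use de Bruijn
   indices, which realizes alpha-equivalence and the freshness conditions. *)
From HB Require Import structures.
From Stdlib Require Import List.
From mathcomp Require Import all_boot all_algebra.
Set Implicit Arguments.
Unset Strict Implicit.
Unset Printing Implicit Defensive.
Import GRing.Theory.
Local Open Scope ring_scope.

Section Scalar.
Variable S : comPzRingType.

Inductive term : Type :=
| Var of nat
| Lam of term
| App of term & term
| Zero
| Scal of S & term
| Plus of term & term.

Inductive term_ac : term -> term -> Prop :=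
| ac_refl t : term_ac t t
| ac_sym t r : term_ac t r -> term_ac r t
| ac_trans t r s : term_ac t r -> term_ac r s -> term_ac t s
| ac_comm t r : term_ac (Plus t r) (Plus r t)
| ac_assoc t r s : term_ac (Plus (Plus t r) s) (Plus t (Plus r s))
| ac_lam t t' : term_ac t t' -> term_ac (Lam t) (Lam t')
| ac_app t t' r r' : term_ac t t' -> term_ac r r' -> term_ac (App t r) (App t' r')
| ac_scal a t t' : term_ac t t' -> term_ac (Scal a t) (Scal a t')
| ac_plus t t' r r' : term_ac t t' -> term_ac r r' -> term_ac (Plus t r) (Plus t' r').

(* Raw type syntax; the grammar is enforced by [unit_ty] / [is_ty]. *)
Inductive ty : Type :=
| TVar of nat
| TArr of ty & ty
| TAll of ty
| TScal of S & ty
| TZero.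

Inductive unit_ty : ty -> Prop :=
| u_var n : unit_ty (TVar n)
| u_arr U T : unit_ty U -> is_ty T -> unit_ty (TArr U T)
| u_all U : unit_ty U -> unit_ty (TAll U)
with is_ty : ty -> Prop :=
| t_unit U : unit_ty U -> is_ty U
| t_all T : is_ty T -> is_ty (TAll T)
| t_scal a T : is_ty T -> is_ty (TScal a T)
| t_zero : is_ty TZero.

Fixpoint tshift (c : nat) (T : ty) : ty :=
  match T with
  | TVar n => TVar (if (n < c)%N then n else n.+1)
  | TArr A B => TArr (tshift c A) (tshift c B)
  | TAll A => TAll (tshift c.+1 A)
  | TScal a A => TScal a (tshift c A)
  | TZero => TZero
  end.

(* tsubst j U T = T[U/j] (variables above j are decremented) *)
Fixpoint tsubst (j : nat) (U : ty) (T : ty) : ty :=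
  match T with
  | TVar n => if n == j then U else if (j < n)%N then TVar n.-1 else TVar n
  | TArr A B => TArr (tsubst j U A) (tsubst j U B)
  | TAll A => TAll (tsubst j.+1 (tshift 0 U) A)
  | TScal a A => TScal a (tsubst j U A)
  | TZero => TZero
  end.

Inductive ty_equiv : ty -> ty -> Prop :=
| eq_refl T : is_ty T -> ty_equiv T T
| eq_sym T T' : ty_equiv T T' -> ty_equiv T' T
| eq_trans T1 T2 T3 : ty_equiv T1 T2 -> ty_equiv T2 T3 -> ty_equiv T1 T3
| eq_scal_zero a : ty_equiv (TScal a TZero) TZero
| eq_zero_scal T : is_ty T -> ty_equiv (TScal 0 T) TZero
| eq_one_scal T : is_ty T -> ty_equiv (TScal 1 T) T
| eq_scal_scal a b T : is_ty T -> ty_equiv (TScal a (TScal b T)) (TScal (a * b) T)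
| eq_all_scal a T : is_ty T -> ty_equiv (TAll (TScal a T)) (TScal a (TAll T))
| eq_cong_arr U U' T T' : unit_ty U -> unit_ty U' -> ty_equiv U U' ->
    ty_equiv T T' -> ty_equiv (TArr U T) (TArr U' T')
| eq_cong_all T T' : ty_equiv T T' -> ty_equiv (TAll T) (TAll T')
| eq_cong_scal a T T' : ty_equiv T T' -> ty_equiv (TScal a T) (TScal a T').

(* Contexts: the unit type of de Bruijn variable n is the n-th entry;
   "Gamma, x:U" is U :: Gamma. *)
Definition ctx := seq ty.
Definition ctx_ok (G : ctx) : Prop := forall U, In U G -> unit_ty U.

Inductive typing : ctx -> term -> ty -> Prop :=
| ty_ax G n : (n < size G)%N -> typing G (Var n) (nth TZero G n)
| ty_equiv_rule G t T T' : typing G t T -> ty_equiv T T' -> typing G t T'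
| ty_arrE G t r a b U T : typing G t (TScal a (TArr U T)) ->
    typing G r (TScal b U) -> typing G (App t r) (TScal (a * b) T)
| ty_arrI G t U T : unit_ty U -> typing (U :: G) t T -> typing G (Lam t) (TArr U T)
| ty_allE G t T U : typing G t (TAll T) -> unit_ty U -> typing G t (tsubst 0 U T)
| ty_allI G t T : typing (map (tshift 0) G) t T -> typing G t (TAll T)
| ty_ax0 G : typing G Zero TZero
| ty_plusI G t r a b T : typing G t (TScal a T) -> typing G r (TScal b T) ->
    typing G (Plus t r) (TScal (a + b) T)
| ty_sI G t a T : typing G t T -> typing G (Scal a t) (TScal a T)
(* terms are considered modulo AC of + *)
| ty_ac G t t' T : typing G t T -> term_ac t t' -> typing G t' T.

End Scalar.

(* Main.v *)
Require Import Defs.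
From mathcomp Require Import all_boot all_algebra.
Import GRing.Theory.
Local Open Scope ring_scope.

Set Implicit Arguments.
Section Proof.
Variable S : comPzRingType.

Fixpoint sc (T : ty S) : S :=
  match T with TScal a T' => a * sc T' | TAll T' => sc T' | _ => 1 end.
Fixpoint ends (T : ty S) : bool :=
  match T with TZero => true | TScal _ T' => ends T' | TAll T' => ends T' | _ => false end.
Fixpoint strip (T : ty S) : ty S :=
  match T with TScal _ T' => strip T' | TAll T' => TAll (strip T') | _ => T end.

Scheme unit_ind' := Induction for unit_ty Sort Prop
 with is_ind' := Induction for is_ty Sort Prop.
Combined Scheme ui_ind from unit_ind', is_ind'.

Lemma shift_ok : (forall T : ty S, unit_ty T -> forall c, unit_ty (tshift c T)) /\
                 (forall T : ty S, is_ty T -> forall c, is_ty (tshift c T)).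
Proof.
apply: ui_ind => /=; intros; try (constructor; auto; fail).
Qed.

Lemma subst_ok : (forall T : ty S, unit_ty T -> forall j U, unit_ty U -> unit_ty (tsubst j U T)) /\
                 (forall T : ty S, is_ty T -> forall j U, unit_ty U -> is_ty (tsubst j U T)).
Proof.
apply: ui_ind => /=; intros; try (constructor; auto; fail).
- case: (n == j) => //. case: (j < n)%N; constructor.
- constructor; apply: H; apply shift_ok; auto.
- apply: t_all; apply: H; apply shift_ok; auto.
Qed.

Lemma unit_sc (U : ty S) : unit_ty U -> sc U = 1 /\ ends U = false.
Proof. elim => //=. Qed.

Lemma subst_sc (T : ty S) : forall j U, unit_ty U ->
  sc (tsubst j U T) = sc T /\ ends (tsubst j U T) = ends T.
Proof.
elim: T => /=.
- move=> n j U hU. case: (n == j); first exact: unit_sc.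
  by case: (j < n)%N.
- by move=> ? h; split.
- move=> T IH j U hU. apply: IH. by apply shift_ok.
- move=> a T IH j U hU. by case: (IH j U hU) => -> ->.
- by move=> ? h; split.
Qed.

Lemma is_ty_inv_all (T : ty S) : is_ty (TAll T) -> is_ty T.
Proof.
move=> h; inversion h; subst => //. inversion H; subst. by constructor.
Qed.

Lemma is_ty_inv_scal a (T : ty S) : is_ty (TScal a T) -> is_ty T.
Proof. move=> h; inversion h; subst => //. inversion H. Qed.

Lemma equiv_is_ty (T T' : ty S) : ty_equiv T T' -> is_ty T /\ is_ty T'.
Proof.
elim => {T T'}.
- by move=> ? h; split.
- by move=> ? ? _ [h1 h2]; split.
- by move=> ? ? ? _ [h1 _] _ [_ h2]; split.
- move=> a; split; [apply: t_scal; apply: t_zero | apply: t_zero].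
- move=> T h; split; [apply: t_scal; exact h | apply: t_zero].
- move=> T h; split; [apply: t_scal; exact h | exact h].
- move=> a b T h; split; [apply: t_scal; apply: t_scal; exact h | apply: t_scal; exact h].
- move=> a T h; split; [apply: t_all; apply: t_scal; exact h | apply: t_scal; apply: t_all; exact h].
- move=> U U' T T' hU hU' _ _ _ [h1 h2]; split; apply: t_unit; apply: u_arr; assumption.
- move=> ? ? _ [h1 h2]; split; apply: t_all; assumption.
- move=> ? ? ? _ [h1 h2]; split; apply: t_scal; assumption.
Qed.

Definition P c (T : ty S) := c * sc T = 0 \/ ends T.

Lemma equiv_P (T T' : ty S) : ty_equiv T T' -> forall c, P c T <-> P c T'.
Proof.
rewrite /P; elim => {T T'} /=.
- by move=> *; split.
- by move=> ? ? _ IH c; rewrite IH.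
- by move=> ? ? ? _ IH1 _ IH2 c; rewrite IH1 IH2.
- by move=> *; split => _; right.
- move=> T _ c; split => _; [by right|]. by left; rewrite mulrA !mulr0 mul0r.
- by move=> T _ c; rewrite mul1r.
- by move=> a b T _ c; rewrite !mulrA.
- by move=> *; split.
- by move=> *; split.
- by move=> ? ? _ IH c; apply: IH.
- by move=> a T T' _ IH c; rewrite !mulrA IH.
Qed.

Lemma term_ac_zero (t r : term S) : term_ac t r -> (t = Zero S <-> r = Zero S).
Proof. elim => {t r}; intros; try tauto; split => //. Qed.

Lemma strip_ok (T : ty S) : is_ty T -> is_ty (strip T) /\ ty_equiv T (TScal (sc T) (strip T)).
Proof.
elim: T => /=.
- move=> n h; split => //. by apply: Defs.eq_sym; apply: eq_one_scal.
- move=> A B h; split => //. by apply: Defs.eq_sym; apply: eq_one_scal.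
- move=> T IH h. case: (IH (is_ty_inv_all h)) => h1 h2. split; first by constructor.
  apply: Defs.eq_trans; first exact: eq_cong_all h2. by apply: eq_all_scal.
- move=> a T IH h. case: (IH (is_ty_inv_scal h)) => h1 h2. split => //.
  apply: Defs.eq_trans; first exact: eq_cong_scal h2. by apply: eq_scal_scal.
- move=> _; split; first by constructor. by apply: Defs.eq_sym; apply: eq_one_scal; constructor.
Qed.

Lemma all_zero : ty_equiv (TAll (TZero S)) (TZero S).
Proof.
apply: (@Defs.eq_trans _ _ (TAll (TScal 0 (TZero S)))).
  exact: eq_cong_all (Defs.eq_sym (eq_scal_zero 0)).
apply: (@Defs.eq_trans _ _ (TScal 0 (TAll (TZero S)))).
  exact: eq_all_scal (t_zero S).
exact: eq_zero_scal (t_all (t_zero S)).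
Qed.

Lemma strip_ends (T : ty S) : ends T -> ty_equiv (strip T) (TZero S).
Proof.
elim: T => //=.
- move=> T IH h. apply: Defs.eq_trans; first exact: eq_cong_all (IH h). exact: all_zero.
- move=> _; by constructor; constructor.
Qed.

Lemma zero_typing G t (T : ty S) : typing G t T -> t = Zero S -> is_ty T /\ P 1 T.
Proof.
elim => {G t T}.
- move=> G n _ e; discriminate e.
- move=> G t T T' _ IH he ht; case: (IH ht) => h1 h2.
  split; first exact: (proj2 (equiv_is_ty he)).
  exact: (proj1 (equiv_P he 1) h2).
- move=> G t r a b U T _ _ _ _ e; discriminate e.
- move=> G t U T _ _ _ e; discriminate e.
- move=> G t T U _ IH hU ht; case: (IH ht) => h1 h2.
  split; first exact: (proj2 subst_ok _ (is_ty_inv_all h1)).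
  rewrite /P in h2 *. by case: (subst_sc T 0 hU) => -> ->.
- move=> G t T _ IH ht; case: (IH ht) => h1 h2. by split; first by constructor.
- move=> G _; split; [exact: t_zero | by right].
- move=> G t r a b T _ _ _ _ e; discriminate e.
- move=> G t a T _ _ e; discriminate e.
- move=> G t t' T _ IH hac ht. apply: IH. by apply (proj2 (term_ac_zero hac)).
Qed.

End Proof.
Unset Implicit Arguments.

Theorem mainTheorem15 (S : comPzRingType) (G : ctx S) (T : ty S) :
  ctx_ok G -> is_ty T -> typing G (Zero S) T -> ty_equiv T (TZero S).
Proof.
move=> _ hT hty. case: (zero_typing hty erefl) => _ hP.
case: (strip_ok hT) => h1 h2. apply: Defs.eq_trans; first exact: h2.
rewrite /P mul1r in hP. case: hP => [->|he].
- by apply: eq_zero_scal.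
- exact: (Defs.eq_trans (@eq_cong_scal _ (sc T) _ _ (@strip_ends _ T he)) (@eq_scal_zero _ (sc T))).
Qed.
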